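(* If $\{B\}\ \Gamma \vdash M_1 : A$ and $M_1 \longrightarrow_{\mathsf{M}} M_2$, then $[\![M_1]\!] \longrightarrow_{\mathsf{M}} [\![M_2]\!]$.
   Context: $\lambda_{\text{ch}}$ is a concurrent fine-grain call-by-value $\lambda$-calculus with asynchronous channels (types $\mathbf{1}$, $A\to B$, $\mathsf{Chan}(A)$, extended with products, sums, recursive functions and iso-recursive types; primitives $\mathsf{fork}$, $\mathsf{give}$, $\mathsf{take}$, $\mathsf{newCh}$), and $\lambda_{\text{act}}$ the analogous actor calculus (primitives $\mathsf{spawn}$, $\mathsf{send}$, $\mathsf{receive}$, $\mathsf{self}$; arrows $A \to^{C} B$ annotated with mailbox type $C$). $\longrightarrow_{\mathsf{M}}$ is the deterministic functional term reduction ($\beta$-reduction, let-return, pair/case/unroll elimination, closed under evaluation contexts). The judgement $\{B\}\ \Gamma \vdash M : A$ means $M$ is a well-typed $\lambda_{\text{ch}}$ term in which all channels have the single type $B$ (written $\mathsf{Chan}$). $[\![-]\!]$ is the translation from $\lambda_{\text{ch}}$ into $\lambda_{\text{act}}$ (with respect to the channel type $B$): on types $[\![\mathsf{Chan}]\!] = \mathsf{ActorRef}([\![B]\!] + \mathsf{ActorRef}([\![B]\!]))$ and $[\![A\to A']\!] = [\![A]\!] \to^{[\![B]\!]} [\![A']\!]$; it is homomorphic on values and functional terms, and translates $\mathsf{fork}\,M$ to spawning $[\![M]\!]$ and returning unit, $\mathsf{give}\,V\,W$ to $\mathsf{send}\,(\mathsf{inl}\,[\![V]\!])\,[\![W]\!]$,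 $\mathsf{take}\,V$ to sending $\mathsf{inr}$ of own pid to $[\![V]\!]$ then $\mathsf{receive}$, and $\mathsf{newCh}$ to spawning an actor running a channel-emulating loop. *)

(* Defs.v *)
From Stdlib Require Import List.
Import ListNotations.

Definition up_ren (xi : nat -> nat) : nat -> nat :=
  fun n => match n with 0 => 0 | S n => S (xi n) end.

(* TyChan is Chan = Chan(B) for the single channel type B.            *)
Inductive ty : Type :=
| TyVar  : nat -> ty
| TyUnit : ty
| TyArr  : ty -> ty -> ty
| TyChan : ty
| TyProd : ty -> ty -> ty
| TySum  : ty -> ty -> ty
| TyMu   : ty -> ty.            (* mu X. A, X = index 0 *)

Fixpoint ty_ren (xi : nat -> nat) (A : ty) : ty :=
  match A with
  | TyVar n => TyVar (xi n)
  | TyUnit => TyUnit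
  | TyArr A1 A2 => TyArr (ty_ren xi A1) (ty_ren xi A2)
  | TyChan => TyChan
  | TyProd A1 A2 => TyProd (ty_ren xi A1) (ty_ren xi A2)
  | TySum A1 A2 => TySum (ty_ren xi A1) (ty_ren xi A2)
  | TyMu A1 => TyMu (ty_ren (up_ren xi) A1)
  end.

Definition ty_up (s : nat -> ty) : nat -> ty :=
  fun n => match n with 0 => TyVar 0 | S n => ty_ren S (s n) end.

Fixpoint ty_subst (s : nat -> ty) (A : ty) : ty :=
  match A with
  | TyVar n => s n
  | TyUnit => TyUnit
  | TyArr A1 A2 => TyArr (ty_subst s A1) (ty_subst s A2)
  | TyChan => TyChan
  | TyProd A1 A2 => TyProd (ty_subst s A1) (ty_subst s A2)
  | TySum A1 A2 => TySum (ty_subst s A1) (ty_subst s A2)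
  | TyMu A1 => TyMu (ty_subst (ty_up s) A1)
  end.

Definition unfold_mu (A : ty) : ty :=
  ty_subst (fun n => match n with 0 => TyMu A | S k => TyVar k end) A.

Module Ch.

Inductive val : Type :=
| VVar  : nat -> val
| VUnit : val
| VLam  : tm -> val
| VRec  : tm -> val              (* rec f(x). M ; x = 0, f = 1 *)
| VPair : val -> val -> val
| VInl  : val -> val
| VInr  : val -> val
| VRoll : val -> val
with tm : Type :=
| App     : val -> val -> tm
| Let     : tm -> tm -> tm
| Ret     : val -> tm
| LetPair : val -> tm -> tm      (* let (x,y) = V in M ; y = 0, x = 1 *)
| Case    : val -> tm -> tm -> tm
| Unroll  : val -> tm
| Fork    : tm -> tm
| Give    : val -> val -> tm
| Take    : val -> tm
| NewCh   : tm.

Fixpoint ren_val (xi : nat -> nat) (v : val) : val :=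
  match v with
  | VVar n => VVar (xi n)
  | VUnit => VUnit
  | VLam M => VLam (ren_tm (up_ren xi) M)
  | VRec M => VRec (ren_tm (up_ren (up_ren xi)) M)
  | VPair V W => VPair (ren_val xi V) (ren_val xi W)
  | VInl V => VInl (ren_val xi V)
  | VInr V => VInr (ren_val xi V)
  | VRoll V => VRoll (ren_val xi V)
  end
with ren_tm (xi : nat -> nat) (M : tm) : tm :=
  match M with
  | App V W => App (ren_val xi V) (ren_val xi W)
  | Let M N => Let (ren_tm xi M) (ren_tm (up_ren xi) N)
  | Ret V => Ret (ren_val xi V)
  | LetPair V N => LetPair (ren_val xi V) (ren_tm (up_ren (up_ren xi)) N)
  | Case V N1 N2 => Case (ren_val xi V) (ren_tm (up_ren xi) N1) (ren_tm (up_ren xi) N2)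
  | Unroll V => Unroll (ren_val xi V)
  | Fork N => Fork (ren_tm xi N)
  | Give V W => Give (ren_val xi V) (ren_val xi W)
  | Take V => Take (ren_val xi V)
  | NewCh => NewCh
  end.

Definition up_sub (s : nat -> val) : nat -> val :=
  fun n => match n with 0 => VVar 0 | S n => ren_val S (s n) end.

Fixpoint subst_val (s : nat -> val) (v : val) : val :=
  match v with
  | VVar n => s n
  | VUnit => VUnit
  | VLam M => VLam (subst_tm (up_sub s) M)
  | VRec M => VRec (subst_tm (up_sub (up_sub s)) M)
  | VPair V W => VPair (subst_val s V) (subst_val s W)
  | VInl V => VInl (subst_val s V)
  | VInr V => VInr (subst_val s V)
  | VRoll V => VRoll (subst_val s V)
  end
with subst_tm (s : nat -> val) (M : tm) : tm :=
  match M with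
  | App V W => App (subst_val s V) (subst_val s W)
  | Let M N => Let (subst_tm s M) (subst_tm (up_sub s) N)
  | Ret V => Ret (subst_val s V)
  | LetPair V N => LetPair (subst_val s V) (subst_tm (up_sub (up_sub s)) N)
  | Case V N1 N2 => Case (subst_val s V) (subst_tm (up_sub s) N1) (subst_tm (up_sub s) N2)
  | Unroll V => Unroll (subst_val s V)
  | Fork N => Fork (subst_tm s N)
  | Give V W => Give (subst_val s V) (subst_val s W)
  | Take V => Take (subst_val s V)
  | NewCh => NewCh
  end.

Definition scons (V : val) (s : nat -> val) : nat -> val :=
  fun n => match n with 0 => V | S k => s k end.

Definition subst1 (V : val) (M : tm) : tm := subst_tm (scons V VVar) M.
Definition subst2 (V W : val) (M : tm) : tm := subst_tm (scons V (scons W VVar)) M.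

Inductive step : tm -> tm -> Prop :=
| st_lam : forall M V, step (App (VLam M) V) (subst1 V M)
| st_rec : forall M V, step (App (VRec M) V) (subst2 V (VRec M) M)
| st_let_ret : forall V N, step (Let (Ret V) N) (subst1 V N)
| st_pair : forall V W N, step (LetPair (VPair V W) N) (subst2 W V N)
| st_case_inl : forall V N1 N2, step (Case (VInl V) N1 N2) (subst1 V N1)
| st_case_inr : forall V N1 N2, step (Case (VInr V) N1 N2) (subst1 V N2)
| st_unroll : forall V, step (Unroll (VRoll V)) (Ret V)
| st_let_ctx : forall M M' N, step M M' -> step (Let M N) (Let M' N).

Inductive vtyped (B : ty) : list ty -> val -> ty -> Prop :=
| tv_var : forall G n A, nth_error G n = Some A -> vtyped B G (VVar n) A
| tv_unit : forall G, vtyped B G VUnit TyUnit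
| tv_lam : forall G M A A', ttyped B (A :: G) M A' -> vtyped B G (VLam M) (TyArr A A')
| tv_rec : forall G M A A', ttyped B (A :: TyArr A A' :: G) M A' ->
    vtyped B G (VRec M) (TyArr A A')
| tv_pair : forall G V W A1 A2, vtyped B G V A1 -> vtyped B G W A2 ->
    vtyped B G (VPair V W) (TyProd A1 A2)
| tv_inl : forall G V A1 A2, vtyped B G V A1 -> vtyped B G (VInl V) (TySum A1 A2)
| tv_inr : forall G V A1 A2, vtyped B G V A2 -> vtyped B G (VInr V) (TySum A1 A2)
| tv_roll : forall G V A, vtyped B G V (unfold_mu A) -> vtyped B G (VRoll V) (TyMu A)
with ttyped (B : ty) : list ty -> tm -> ty -> Prop :=
| tt_app : forall G V W A A', vtyped B G V (TyArr A A') -> vtyped B G W A ->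
    ttyped B G (App V W) A'
| tt_let : forall G M N A A', ttyped B G M A -> ttyped B (A :: G) N A' ->
    ttyped B G (Let M N) A'
| tt_ret : forall G V A, vtyped B G V A -> ttyped B G (Ret V) A
| tt_letpair : forall G V N A1 A2 A', vtyped B G V (TyProd A1 A2) ->
    ttyped B (A2 :: A1 :: G) N A' -> ttyped B G (LetPair V N) A'
| tt_case : forall G V N1 N2 A1 A2 A', vtyped B G V (TySum A1 A2) ->
    ttyped B (A1 :: G) N1 A' -> ttyped B (A2 :: G) N2 A' ->
    ttyped B G (Case V N1 N2) A'
| tt_unroll : forall G V A, vtyped B G V (TyMu A) ->
    ttyped B G (Unroll V) (unfold_mu A)
| tt_fork : forall G M, ttyped B G M TyUnit -> ttyped B G (Fork M) TyUnit
| tt_give : forall G V W, vtyped B G V B -> vtyped B G W TyChan ->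
    ttyped B G (Give V W) TyUnit
| tt_take : forall G V, vtyped B G V TyChan -> ttyped B G (Take V) B
| tt_newch : forall G, ttyped B G NewCh TyChan.

End Ch.

Module Act.

Inductive val : Type :=
| VVar  : nat -> val
| VUnit : val
| VLam  : tm -> val
| VRec  : tm -> val
| VPair : val -> val -> val
| VInl  : val -> val
| VInr  : val -> val
| VRoll : val -> val
with tm : Type :=
| App     : val -> val -> tm
| Let     : tm -> tm -> tm
| Ret     : val -> tm
| LetPair : val -> tm -> tm
| Case    : val -> tm -> tm -> tm
| Unroll  : val -> tm
| Spawn   : tm -> tm
| Send    : val -> val -> tm     (* send V W : send message V to actor W *)
| Receive : tm
| Self    : tm.

Fixpoint ren_val (xi : nat -> nat) (v : val) : val :=
  match v with
  | VVar n => VVar (xi n)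
  | VUnit => VUnit
  | VLam M => VLam (ren_tm (up_ren xi) M)
  | VRec M => VRec (ren_tm (up_ren (up_ren xi)) M)
  | VPair V W => VPair (ren_val xi V) (ren_val xi W)
  | VInl V => VInl (ren_val xi V)
  | VInr V => VInr (ren_val xi V)
  | VRoll V => VRoll (ren_val xi V)
  end
with ren_tm (xi : nat -> nat) (M : tm) : tm :=
  match M with
  | App V W => App (ren_val xi V) (ren_val xi W)
  | Let M N => Let (ren_tm xi M) (ren_tm (up_ren xi) N)
  | Ret V => Ret (ren_val xi V)
  | LetPair V N => LetPair (ren_val xi V) (ren_tm (up_ren (up_ren xi)) N)
  | Case V N1 N2 => Case (ren_val xi V) (ren_tm (up_ren xi) N1) (ren_tm (up_ren xi) N2)
  | Unroll V => Unroll (ren_val xi V)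
  | Spawn N => Spawn (ren_tm xi N)
  | Send V W => Send (ren_val xi V) (ren_val xi W)
  | Receive => Receive
  | Self => Self
  end.

Definition up_sub (s : nat -> val) : nat -> val :=
  fun n => match n with 0 => VVar 0 | S n => ren_val S (s n) end.

Fixpoint subst_val (s : nat -> val) (v : val) : val :=
  match v with
  | VVar n => s n
  | VUnit => VUnit
  | VLam M => VLam (subst_tm (up_sub s) M)
  | VRec M => VRec (subst_tm (up_sub (up_sub s)) M)
  | VPair V W => VPair (subst_val s V) (subst_val s W)
  | VInl V => VInl (subst_val s V)
  | VInr V => VInr (subst_val s V)
  | VRoll V => VRoll (subst_val s V)
  end
with subst_tm (s : nat -> val) (M : tm) : tm :=
  match M with
  | App V W => App (subst_val s V) (subst_val s W)
  | Let M N => Let (subst_tm s M) (subst_tm (up_sub s) N)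
  | Ret V => Ret (subst_val s V)
  | LetPair V N => LetPair (subst_val s V) (subst_tm (up_sub (up_sub s)) N)
  | Case V N1 N2 => Case (subst_val s V) (subst_tm (up_sub s) N1) (subst_tm (up_sub s) N2)
  | Unroll V => Unroll (subst_val s V)
  | Spawn N => Spawn (subst_tm s N)
  | Send V W => Send (subst_val s V) (subst_val s W)
  | Receive => Receive
  | Self => Self
  end.

Definition scons (V : val) (s : nat -> val) : nat -> val :=
  fun n => match n with 0 => V | S k => s k end.

Definition subst1 (V : val) (M : tm) : tm := subst_tm (scons V VVar) M.
Definition subst2 (V W : val) (M : tm) : tm := subst_tm (scons V (scons W VVar)) M.

Inductive step : tm -> tm -> Prop :=
| st_lam : forall M V, step (App (VLam M) V) (subst1 V M)
| st_rec : forall M V, step (App (VRec M) V) (subst2 V (VRec M) M)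
| st_let_ret : forall V N, step (Let (Ret V) N) (subst1 V N)
| st_pair : forall V W N, step (LetPair (VPair V W) N) (subst2 W V N)
| st_case_inl : forall V N1 N2, step (Case (VInl V) N1 N2) (subst1 V N1)
| st_case_inr : forall V N1 N2, step (Case (VInr V) N1 N2) (subst1 V N2)
| st_unroll : forall V, step (Unroll (VRoll V)) (Ret V)
| st_let_ctx : forall M M' N, step M M' -> step (Let M N) (Let M' N).

(* iso-recursive lists:  [] = roll (inl ()),  v :: vs = roll (inr (v, vs)) *)
Definition vnil : val := VRoll (VInl VUnit).
Definition vcons (v vs : val) : val := VRoll (VInr (VPair v vs)).

(* append = rec app(p). let (l, ys) = p in let u <= unroll l in
     case u { inl _ -> return ys
            ; inr c -> let (h, t) = c in let r <= app (t, ys) in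
                       return (h :: r) } *)
Definition append : val :=
  VRec (LetPair (VVar 0)
   (Let (Unroll (VVar 1))
    (Case (VVar 0)
      (Ret (VVar 2))
      (LetPair (VVar 0)
        (Let (App (VVar 7) (VPair (VVar 0) (VVar 4)))
          (Ret (vcons (VVar 2) (VVar 0)))))))).

(* drain = \x. let (vals, pids) = x in
     case vals { [] -> return (vals, pids)
               ; v :: vs -> case pids { [] -> return (vals, pids)
                                      ; pid :: pids' -> send v pid;
                                                        return (vs, pids') } } *)
Definition drain : val :=
  VLam (LetPair (VVar 0)
   (Let (Unroll (VVar 1))
    (Case (VVar 0)
      (Ret (VPair (VVar 3) (VVar 2)))
      (LetPair (VVar 0)
       (Let (Unroll (VVar 4))
        (Case (VVar 0)
          (Ret (VPair (VVar 7) (VVar 6)))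
          (LetPair (VVar 0)
            (Let (Send (VVar 5) (VVar 1))
              (Ret (VPair (VVar 5) (VVar 1))))))))))).

(* body = rec g(state). let recvVal <= receive in let (vals, pids) = state in
     case recvVal { inl v   -> let vals' <= vals ++ [v] in
                               let st <= drain (vals', pids) in g st
                  ; inr pid -> let pids' <= pids ++ [pid] in
                               let st <= drain (vals, pids') in g st } *)
Definition chan_body : val :=
  VRec (Let Receive
   (LetPair (VVar 1)
    (Case (VVar 2)
      (Let (App append (VPair (VVar 2) (vcons (VVar 0) vnil)))
        (Let (App drain (VPair (VVar 0) (VVar 2)))
          (App (VVar 7) (VVar 0))))
      (Let (App append (VPair (VVar 1) (vcons (VVar 0) vnil)))
        (Let (App drain (VPair (VVar 3) (VVar 0)))
          (App (VVar 7) (VVar 0))))))).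

End Act.

Fixpoint tr_val (v : Ch.val) : Act.val :=
  match v with
  | Ch.VVar n => Act.VVar n
  | Ch.VUnit => Act.VUnit
  | Ch.VLam M => Act.VLam (tr_tm M)
  | Ch.VRec M => Act.VRec (tr_tm M)
  | Ch.VPair V W => Act.VPair (tr_val V) (tr_val W)
  | Ch.VInl V => Act.VInl (tr_val V)
  | Ch.VInr V => Act.VInr (tr_val V)
  | Ch.VRoll V => Act.VRoll (tr_val V)
  end
with tr_tm (M : Ch.tm) : Act.tm :=
  match M with
  | Ch.App V W => Act.App (tr_val V) (tr_val W)
  | Ch.Let M N => Act.Let (tr_tm M) (tr_tm N)
  | Ch.Ret V => Act.Ret (tr_val V)
  | Ch.LetPair V N => Act.LetPair (tr_val V) (tr_tm N)
  | Ch.Case V N1 N2 => Act.Case (tr_val V) (tr_tm N1) (tr_tm N2)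
  | Ch.Unroll V => Act.Unroll (tr_val V)
  | Ch.Fork N => Act.Let (Act.Spawn (tr_tm N)) (Act.Ret Act.VUnit)
  | Ch.Give V W => Act.Send (Act.VInl (tr_val V)) (tr_val W)
  | Ch.Take V =>
      Act.Let Act.Self
        (Act.Let (Act.Send (Act.VInr (Act.VVar 0)) (Act.ren_val S (tr_val V)))
                 Act.Receive)
  | Ch.NewCh => Act.Spawn (Act.App Act.chan_body (Act.VPair Act.vnil Act.vnil))
  end.

(* Main.v *)
Require Import Defs.

Scheme act_val_ind' := Induction for Act.val Sort Prop
with act_tm_ind' := Induction for Act.tm Sort Prop.
Combined Scheme act_mut from act_val_ind', act_tm_ind'.
Scheme ch_val_ind' := Induction for Ch.val Sort Prop
with ch_tm_ind' := Induction for Ch.tm Sort Prop.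
Combined Scheme ch_mut from ch_val_ind', ch_tm_ind'.

Lemma up_ren_ext xi zeta : (forall n, xi n = zeta n) -> forall n, up_ren xi n = up_ren zeta n.
Proof. intros H [|n]; simpl; auto. Qed.

Lemma act_ren_ext :
  (forall v xi zeta, (forall n, xi n = zeta n) -> Act.ren_val xi v = Act.ren_val zeta v) /\
  (forall t xi zeta, (forall n, xi n = zeta n) -> Act.ren_tm xi t = Act.ren_tm zeta t).
Proof.
  apply act_mut; intros; simpl; f_equal; eauto 10 using up_ren_ext.
Qed.

Lemma act_ren_ren :
  (forall v xi zeta, Act.ren_val xi (Act.ren_val zeta v) = Act.ren_val (fun n => xi (zeta n)) v) /\
  (forall t xi zeta, Act.ren_tm xi (Act.ren_tm zeta t) = Act.ren_tm (fun n => xi (zeta n)) t).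
Proof.
  apply act_mut; intros; simpl; f_equal; auto;
  repeat match goal with
  | H : forall xi zeta, Act.ren_tm xi (Act.ren_tm zeta ?t) = _ |- context [Act.ren_tm _ (Act.ren_tm _ ?t)] =>
      rewrite H; apply (proj2 act_ren_ext); intros [|[|?]]; reflexivity
  end.
Qed.

Lemma act_up_sub_ext s s' : (forall n, s n = s' n) -> forall n, Act.up_sub s n = Act.up_sub s' n.
Proof. intros H [|n]; simpl; rewrite ?H; reflexivity. Qed.

Lemma act_subst_ext :
  (forall v s s', (forall n, s n = s' n) -> Act.subst_val s v = Act.subst_val s' v) /\
  (forall t s s', (forall n, s n = s' n) -> Act.subst_tm s t = Act.subst_tm s' t).
Proof.
  apply act_mut; intros; simpl; f_equal; eauto 10 using act_up_sub_ext.
Qed.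

Lemma act_subst_ren :
  (forall v s xi, Act.subst_val s (Act.ren_val xi v) = Act.subst_val (fun n => s (xi n)) v) /\
  (forall t s xi, Act.subst_tm s (Act.ren_tm xi t) = Act.subst_tm (fun n => s (xi n)) t).
Proof.
  apply act_mut; intros; simpl; f_equal; auto;
  match goal with
  | H : forall s xi, Act.subst_tm s (Act.ren_tm xi ?t) = _ |- _ =>
      rewrite H; apply (proj2 act_subst_ext); intros [|[|?]]; reflexivity
  end.
Qed.

Lemma act_ren_subst :
  (forall v s xi, Act.ren_val xi (Act.subst_val s v) = Act.subst_val (fun n => Act.ren_val xi (s n)) v) /\
  (forall t s xi, Act.ren_tm xi (Act.subst_tm s t) = Act.subst_tm (fun n => Act.ren_val xi (s n)) t).
Proof.
  apply act_mut; intros; simpl; f_equal; auto;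
  match goal with
  | H : forall s xi, Act.ren_tm xi (Act.subst_tm s ?t) = _ |- _ =>
      rewrite H; apply (proj2 act_subst_ext); intros [|[|?]]; simpl; try reflexivity;
      rewrite ?(proj1 act_ren_ren); apply (proj1 act_ren_ext); reflexivity
  end.
Qed.

Lemma tr_ren :
  (forall v xi, tr_val (Ch.ren_val xi v) = Act.ren_val xi (tr_val v)) /\
  (forall t xi, tr_tm (Ch.ren_tm xi t) = Act.ren_tm xi (tr_tm t)).
Proof.
  apply ch_mut; intros; simpl;
    try (rewrite H, !(proj1 act_ren_ren); reflexivity);
    try (rewrite H, H0; reflexivity); try (rewrite H; reflexivity); f_equal; auto.
Qed.

Lemma tr_subst :
  (forall v s s', (forall n, tr_val (s n) = s' n) -> tr_val (Ch.subst_val s v) = Act.subst_val s' (tr_val v)) /\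
  (forall t s s', (forall n, tr_val (s n) = s' n) -> tr_tm (Ch.subst_tm s t) = Act.subst_tm s' (tr_tm t)).
Proof.
  assert (Hup : forall s s', (forall n, tr_val (s n) = s' n) ->
            forall n, tr_val (Ch.up_sub s n) = Act.up_sub s' n).
  { intros s s' H [|n]; simpl; auto. rewrite (proj1 tr_ren), H; reflexivity. }
  apply ch_mut; intros; simpl;
    try (erewrite H by eauto; rewrite (proj1 act_subst_ren), (proj1 act_ren_subst); reflexivity);
    try (erewrite H, H0 by eauto; reflexivity); try (erewrite H by eauto; reflexivity);
    f_equal; eauto 10.
Qed.

Lemma tr_subst1 V M : tr_tm (Ch.subst1 V M) = Act.subst1 (tr_val V) (tr_tm M).
Proof. apply (proj2 tr_subst); intros [|n]; reflexivity. Qed.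

Lemma tr_subst2 V W M : tr_tm (Ch.subst2 V W M) = Act.subst2 (tr_val V) (tr_val W) (tr_tm M).
Proof. apply (proj2 tr_subst); intros [|[|n]]; reflexivity. Qed.

Theorem lemma25 (B : ty) (G : list ty) (M1 M2 : Ch.tm) (A : ty) :
  Ch.ttyped B G M1 A -> Ch.step M1 M2 -> Act.step (tr_tm M1) (tr_tm M2).
Proof.
  intros _ H. induction H; simpl;
  rewrite ?tr_subst1, ?tr_subst2; try constructor; auto.
Qed.
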